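(* In the setting of the context, suppose Condition I holds ($ZR^i\in L^1$ for all $i$ and all $Z\in\mathcal{Q}$), and let $\tilde{\mathcal{Q}}\subset\mathcal{Q}$ satisfy Conditions POS and INT. If $1\in\tilde{\mathcal{Q}}$, then $\rho$ is strictly expectation bounded (i.e. $\rho(X)>\mathbb{E}[-X]$ for every non-constant $X\in L$) and $\Pi^\rho_0=\{\mathbf{0}\}$. If in addition $\rho_1<\infty$, then for all $\nu\ge0$ the set $\Pi^\rho_\nu$ is nonempty, compact and convex.
   Context: Let $(\Omega,\mathcal{F},\mathbb{P})$ be a probability space and a market: riskless asset $S^0_0=1$, $S^0_1=1+r$, $r>-1$; risky assets $S^1,\dots,S^d$ with constants $S^i_0>0$ and real-valued $\mathcal{F}$-measurable $S^i_1$; returns $R^i:=(S^i_1-S^i_0)/S^i_0$. Standing assumptions: nonredundancy (if $\theta\in\mathbb{R}^{1+d}$ with $\sum_{i=0}^d\theta^iS^i_t=0$ a.s. for $t\in\{0,1\}$ then $\theta=0$), $R^i\in L^1$, $\mathbb{E}[R^i]\ne r$ for some $i$. Excess return: $X_\pi:=\pi\cdot(R-r\mathbf{1})$; $\Pi_\nu:=\{\pi:\mathbb{E}[X_\pi]=\nu\}$. $L$ is a Riesz space with $L^\infty\subset L\subset L^1$ containing all $X_\pi$. $\mathcal{D}:=\{Z\in L^1:Z\ge0,\mathbb{E}[Z]=1\}$; $\mathcal{Q}\subset\mathcal{D}$ is convex with $1\in\mathcal{Q}$ and $\rho(X)=\sup_{Z\in\mathcal{Q}}\mathbb{E}[-ZX]$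 on $L$, with $\mathbb{E}[-ZX]:=\mathbb{E}[ZX^-]-\mathbb{E}[ZX^+]$ and $\mathbb{E}[-ZX]=\infty$ if $\mathbb{E}[ZX^-]=\infty$. $\rho_\nu:=\inf\{\rho(X_\pi):\pi\in\Pi_\nu\}$; $\Pi^\rho_\nu$ is the set of $\pi\in\Pi_\nu$ with $\rho(X_\pi)<\infty$ and $\rho(X_\pi)\le\rho(X_{\pi'})$ for all $\pi'\in\Pi_\nu$. Condition POS for $\tilde{\mathcal{Q}}$: $\tilde Z>0$ a.s. for all $\tilde Z\in\tilde{\mathcal{Q}}$. Condition INT: for every $\tilde Z\in\tilde{\mathcal{Q}}$ there is an $L^\infty$-dense subset $\mathcal{E}$ of $\mathcal{D}\cap L^\infty$ such that for every $Z\in\mathcal{E}$ there is $\lambda\in(0,1)$ with $\lambda Z+(1-\lambda)\tilde Z\in\mathcal{Q}$. *)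

(* Defs.v *)
From HB Require Import structures.
From mathcomp Require Import all_boot all_order all_algebra.
From mathcomp Require Import all_classical all_reals all_analysis.
Set Implicit Arguments. Unset Strict Implicit. Unset Printing Implicit Defensive.
Import Order.TTheory GRing.Theory Num.Theory.
Import numFieldNormedType.Exports.
Local Open Scope classical_set_scope.
Local Open Scope ring_scope.

Section RiskMeasureDefs.
Context {d : measure_display} {T : measurableType d} {R : realType}
  (P : probability T R).

(** Random variables are represented by (measurable) functions T -> R; sets of
    equivalence classes (subsets of L^0) are represented by sets of functions
    that are saturated under a.s. equality. *)
Definition aeeq (f g : T -> R) : Prop := {ae P, forall x, f x = g x}.

Definition ae_saturated (A : set (T -> R)) : Prop :=
  forall f g, A f -> measurable_fun setT g -> aeeq f g -> A g.

Definition isL1 (f : T -> R) : Prop :=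
  measurable_fun setT f /\ P.-integrable setT (EFin \o f).

Definition isLinf (f : T -> R) : Prop :=
  measurable_fun setT f /\ exists c : R, {ae P, forall x, `|f x| <= c}.

Definition mean (X : T -> R) : \bar R := (\int[P]_x (X x)%:E)%E.

Definition riesz_between (L : set (T -> R)) : Prop :=
  ae_saturated L /\
  [/\ (forall f g, L f -> L g -> L (fun x => f x + g x)),
      (forall (a : R) f, L f -> L (fun x => a * f x)),
      (forall f g, L f -> L g -> L (fun x => Num.max (f x) (g x))),
      (forall f, isLinf f -> L f) &
      (forall f, L f -> isL1 f)].

Definition Dset (Z : T -> R) : Prop :=
  [/\ isL1 Z, {ae P, forall x, 0 <= Z x} & mean Z = 1%E].

Definition EnegZX (Z X : T -> R) : \bar R :=
  let a := (\int[P]_x (Z x * Num.max (- X x) 0)%:E)%E in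
  if a == +oo%E then +oo%E
  else (a - \int[P]_x (Z x * Num.max (X x) 0)%:E)%E.

Definition rho (Q : set (T -> R)) (X : T -> R) : \bar R :=
  ereal_sup [set EnegZX Z X | Z in Q].

Definition Q_admissible (Q : set (T -> R)) : Prop :=
  [/\ ae_saturated Q,
      (forall Z, Q Z -> Dset Z),
      (forall Z1 Z2 (l : R), Q Z1 -> Q Z2 -> 0 <= l <= 1 ->
          Q (fun x => l * Z1 x + (1 - l) * Z2 x)) &
      Q (cst 1)].

Definition strictly_expectation_bounded (L Q : set (T -> R)) : Prop :=
  forall X, L X -> ~ (exists c : R, aeeq X (cst c)) -> (- mean X < rho Q X)%E.

Definition cond_POS (Qt : set (T -> R)) : Prop :=
  forall Z, Qt Z -> {ae P, forall x, 0 < Z x}.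

Definition cond_INT (Q Qt : set (T -> R)) : Prop :=
  forall Zt, Qt Zt -> exists E : set (T -> R),
    [/\ (forall Z, E Z -> Dset Z /\ isLinf Z),
        (forall Z, Dset Z -> isLinf Z -> forall eps : R, 0 < eps ->
            exists2 Z', E Z' & {ae P, forall x, `|Z x - Z' x| <= eps}) &
        (forall Z, E Z -> exists2 l : R, 0 < l < 1 &
            Q (fun x => l * Z x + (1 - l) * Zt x))].

Section Market.
Variables (n : nat) (r : R) (S0 : 'I_n -> R) (S1 : 'I_n -> T -> R).

Definition Ret (i : 'I_n) (w : T) : R := (S1 i w - S0 i) / S0 i.

Definition market_assumptions : Prop :=
  -1 < r /\
  [/\ (forall i, 0 < S0 i),
      (forall i, measurable_fun setT (S1 i)),
      (forall (th0 : R) (th : 'rV[R]_n),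
          th0 * 1 + \sum_i th 0 i * S0 i = 0 ->
          {ae P, forall w, th0 * (1 + r) + \sum_i th 0 i * S1 i w = 0} ->
          th0 = 0 /\ th = 0),
      (forall i, isL1 (Ret i)) &
      (exists i, mean (Ret i) != r%:E)].

Definition Xpi (pi : 'rV[R]_n) (w : T) : R := \sum_i pi 0 i * (Ret i w - r).

Definition Pi_nu (nu : R) : set 'rV[R]_n := [set pi | mean (Xpi pi) = nu%:E].

Definition rho_nu (Q : set (T -> R)) (nu : R) : \bar R :=
  ereal_inf [set rho Q (Xpi pi) | pi in Pi_nu nu].

Definition Pi_rho (Q : set (T -> R)) (nu : R) : set 'rV[R]_n :=
  [set pi | [/\ Pi_nu nu pi, (rho Q (Xpi pi) < +oo)%E &
     forall pi', Pi_nu nu pi' -> (rho Q (Xpi pi) <= rho Q (Xpi pi'))%E]].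

Definition cond_I (Q : set (T -> R)) : Prop :=
  forall i Z, Q Z -> isL1 (fun w => Z w * Ret i w).

End Market.
End RiskMeasureDefs.

(* Main.v *)
Require Import Defs.
From HB Require Import structures.
From mathcomp Require Import all_boot all_order all_algebra.
From mathcomp Require Import all_classical all_reals all_analysis.
Import Order.TTheory GRing.Theory Num.Theory.
Import numFieldNormedType.Exports.
Local Open Scope classical_set_scope.
Local Open Scope ring_scope.
From mathcomp Require Import measurable_realfun finmap ring lra.
Set Implicit Arguments. Unset Strict Implicit. Unset Printing Implicit Defensive.

Section Abs.
Context {R : realType} {n : nat}.
Implicit Types (p q u c : 'rV[R]_n).

Definition dotp p c := \sum_i p 0 i * c 0 i.

Lemma dotpD p q c : dotp (p + q) c = dotp p c + dotp q c.
Proof. by rewrite /dotp -big_split; apply: eq_bigr => i _; rewrite mxE mulrDl. Qed.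
Lemma dotpZ k p c : dotp (k *: p) c = k * dotp p c.
Proof. by rewrite /dotp mulr_sumr; apply: eq_bigr => i _; rewrite mxE mulrA. Qed.
Lemma dotpN p c : dotp (- p) c = - dotp p c.
Proof. by rewrite -scaleN1r dotpZ mulN1r. Qed.
Lemma dotpB p q c : dotp (p - q) c = dotp p c - dotp q c.
Proof. by rewrite dotpD dotpN. Qed.
Lemma dotp0 c : dotp 0 c = 0.
Proof. by rewrite -(scale0r 0) dotpZ mul0r. Qed.

Lemma dotp_cont c : continuous (fun p => dotp p c).
Proof.
move=> p; rewrite /dotp; elim: (index_enum _) => [|i s IH].
  under eq_fun do rewrite big_nil.
  exact: cst_continuous.
under eq_fun do rewrite big_cons.
apply: (@continuousD _ _ _ (fun q : 'rV[R]_n => q 0 i * c 0 i)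
  (fun q => \sum_(j <- s) q 0 j * c 0 j)) => //.
apply: (@continuousM _ _ (fun q : 'rV[R]_n => q 0 i) (fun=> c 0 i)).
  exact: coord_continuous.
exact: cst_continuous.
Qed.

Variable C : set 'rV[R]_n.
Definition G p := ereal_sup [set (- dotp p c)%:E | c in C].

Lemma G_ge p c : C c -> ((- dotp p c)%:E <= G p)%E.
Proof. by move=> Cc; apply: ereal_sup_ubound; exists c. Qed.

Lemma G_le p (t : R) : (forall c, C c -> - dotp p c <= t) -> (G p <= t%:E)%E.
Proof. by move=> H; apply: ge_ereal_sup => _ [c Cc <-]; rewrite lee_fin H. Qed.

Lemma G_closed (t : R) : closed [set p | (G p <= t%:E)%E].
Proof.
have -> : [set p | (G p <= t%:E)%E] = \bigcap_(c in C) [set p | - dotp p c <= t].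
  apply/seteqP; split => p /=.
    by move=> Gp c Cc /=; rewrite -lee_fin (le_trans _ Gp)// G_ge.
  by move=> H; apply: G_le => c Cc; exact: H.
apply: closed_bigI => c _.
have -> : [set p | - dotp p c <= t] = (fun p => dotp p c) @^-1` [set x | - t <= x].
  by apply/seteqP; split => p /=; rewrite lerNl.
apply: preimage_closed; last exact: closed_ge.
move=> p _; exact: dotp_cont.
Qed.

Lemma seq_min (X : eqType) (s : seq X) (g : X -> R) :
  (forall x, x \in s -> 0 < g x) ->
  exists2 d0, 0 < d0 & forall x, x \in s -> d0 <= g x.
Proof.
elim: s => [|x s IH] H; first by exists 1.
have [|d0 d0p Hd] := IH; first by move=> y ys; apply: H; rewrite inE ys orbT.
exists (Num.min (g x) d0).
  by rewrite lt_min d0p andbT; apply: H; rewrite inE eqxx.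
move=> y; rewrite inE => /orP[/eqP->|ys]; first by rewrite ge_min lexx.
by rewrite ge_min Hd ?orbT.
Qed.

Lemma seq_max (X : eqType) (s : seq X) (g : X -> R) :
  exists M, forall x, x \in s -> g x <= M.
Proof.
elim: s => [|x s [M HM]]; first by exists 0.
exists (Num.max (g x) M) => y; rewrite inE => /orP[/eqP->|ys].
  by rewrite le_max lexx.
by rewrite le_max HM ?orbT.
Qed.

Lemma bounded_of (A : set 'rV[R]_n) (M : R) :
  (forall p, A p -> `|p| <= M) -> bounded_set A.
Proof.
move=> H; exists M; split; first exact: num_real.
by move=> N MN p Ap /=; rewrite (le_trans (H _ Ap))// ltW.
Qed.

Variable m : 'rV[R]_n.
Hypothesis Cm : C m.

Lemma G_gem p : ((- dotp p m)%:E <= G p)%E.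
Proof. exact: G_ge. Qed.

Lemma G_fin p : (G p < +oo)%E -> G p = (fine (G p))%:E.
Proof.
move=> Gp; rewrite fineK// fin_numElt Gp andbT.
exact: (lt_le_trans (ltNyr _) (G_gem p)).
Qed.

Lemma G_ge_fin p c : C c -> (G p < +oo)%E -> - dotp p c <= fine (G p).
Proof. by move=> Cc Gp; rewrite -lee_fin -G_fin// G_ge. Qed.

Hypothesis H2 : forall u, dotp u m = 0 -> u != 0 -> (0%:E < G u)%E.

Lemma level_bounded p0 (K0 : R) :
  exists M : R, forall p, dotp p m = dotp p0 m -> (G p <= K0%:E)%E ->
    `|p - p0| <= M.
Proof.
pose S := [set u : 'rV[R]_n | dotp u m = 0 /\ `|u| = 1].
have Scomp : compact S.
  apply: bounded_closed_compact.
    by apply: (@bounded_of _ 1) => u [_ ->].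
  have -> : S = [set u : 'rV[R]_n | dotp u m = 0] `&` [set u | `|u| = 1] by [].
  apply: closedI.
    have -> : [set u : 'rV[R]_n | dotp u m = 0] = (fun u => dotp u m) @^-1` [set x | x = 0].
      by [].
    apply: preimage_closed; last exact: closed_eq.
    by move=> u _; exact: dotp_cont.
  have -> : [set u : 'rV[R]_n | `|u| = 1] = (fun u => `|u|) @^-1` [set x : R | x = 1].
    by [].
  apply: preimage_closed; last exact: closed_eq.
  by move=> u _; exact: norm_continuous.
pose I := ('rV[R]_n * R)%type.
pose D := [set cd : I | C cd.1 /\ 0 < cd.2].
pose f := fun cd : I => [set u : 'rV[R]_n | cd.2 < - dotp u cd.1].
have fop : forall i, D i -> open (f i).
  move=> [c dl] _.
  have -> : f (c, dl) = (fun u => dotp u c) @^-1` [set x | x < - dl].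
    by apply/seteqP; split => u /=; rewrite ltrNr.
  apply: open_comp; last exact: open_lt.
  by move=> u _; exact: dotp_cont.
have Scov : S `<=` cover D f.
  move=> u [um u1].
  have u0 : u != 0 by apply/eqP => u0; move: u1; rewrite u0 normr0 => /eqP; rewrite eq_sym oner_eq0.
  have /ereal_sup_gt [_ [c Cc <-]] := H2 um u0.
  rewrite lte_fin => dc.
  exists (c, - dotp u c / 2); first by split => //=; rewrite divr_gt0.
  by rewrite /f /=; rewrite ltr_pdivrMr// ltr_pMr// ltr1n.
have Scc : cover_compact S by rewrite -compact_cover.
have [D' D'D D'cov] := Scc I D f fop Scov.
have [d0 d0p Hd0] := @seq_min _ (enum_fset D') (fun cd => cd.2)
  (fun x xD => (set_mem (D'D x xD)).2).
have [M0 HM0] := @seq_max _ (enum_fset D') (fun cd => dotp p0 cd.1).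
exists (Num.max 0 ((K0 + M0) / d0)) => p pm Gp.
set w := p - p0.
have [->|w0] := eqVneq w 0; first by rewrite normr0 le_max lexx.
have wm : dotp w m = 0 by rewrite /w dotpB pm subrr.
have nw : 0 < `|w| by rewrite normr_gt0.
pose u := `|w|^-1 *: w.
have wu : w = `|w| *: u by rewrite /u scalerA mulfV ?gt_eqF// scale1r.
have Su : S u.
  split; first by rewrite /u dotpZ wm mulr0.
  by rewrite /u normrZ normfV normr_id mulVf// gt_eqF.
have [[c dl] cdD' /= ucd] := D'cov u Su.
have [Cc _] := set_mem (D'D _ cdD').
have hd : d0 <= dl by exact: (Hd0 (c, dl) cdD').
have hM : dotp p0 c <= M0 by exact: (HM0 (c, dl) cdD').
have key : - M0 + `|w| * d0 <= K0.
  have : ((- dotp p c)%:E <= K0%:E)%E by exact: le_trans (G_ge p Cc) Gp.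
  rewrite lee_fin; apply: le_trans.
  have -> : p = p0 + `|w| *: u by rewrite -wu /w addrC subrK.
  rewrite dotpD dotpZ opprD lerD// ?lerN2// -mulrN.
  by rewrite ler_wpM2l// (le_trans hd)// ltW.
rewrite le_max; apply/orP; right.
rewrite ler_pdivlMr//; lra.
Qed.

Lemma G0 : G 0 = 0%:E.
Proof.
apply/eqP; rewrite eq_le; apply/andP; split.
  by apply: G_le => c _; rewrite dotp0 oppr0.
by have := G_gem 0; rewrite dotp0 oppr0.
Qed.

Lemma G_conv p q (t : R) : 0 <= t <= 1 -> (G p < +oo)%E -> (G q < +oo)%E ->
  (G (t *: p + (1 - t) *: q) <= (t * fine (G p) + (1 - t) * fine (G q))%:E)%E.
Proof.
move=> /andP[t0 t1] Gp Gq; apply: G_le => c Cc.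
rewrite dotpD !dotpZ opprD -!mulrN.
apply: lerD; apply: ler_wpM2l => //; try exact: G_ge_fin.
by rewrite subr_ge0.
Qed.

Lemma G_scale (a : R) p : 0 <= a -> (G p < +oo)%E ->
  (G (a *: p) <= (a * fine (G p))%:E)%E.
Proof.
move=> a0 Gp; apply: G_le => c Cc; rewrite dotpZ -mulrN ler_wpM2l//.
exact: G_ge_fin.
Qed.

Lemma G_gtNy p : (-oo < G p)%E.
Proof. exact: (lt_le_trans (ltNyr _) (G_gem p)). Qed.

Lemma seq_pick (K : set 'rV[R]_n) p0 (s : seq R) : K p0 ->
  (forall t, t \in s -> exists q, K q /\ (G q < t%:E)%E) ->
  exists q, K q /\ forall t, t \in s -> (G q < t%:E)%E.
Proof.
move=> Kp0; elim: s => [|t s IH] H; first by exists p0.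
have [|q2 [Kq2 Hq2]] := IH; first by move=> t' ts; apply: H; rewrite inE ts orbT.
have [q1 [Kq1 Hq1]] := H t (mem_head _ _).
have [G12|G21] := leP (G q1) (G q2).
  exists q1; split => // t'; rewrite inE => /orP[/eqP->//|ts].
  exact: le_lt_trans G12 (Hq2 _ ts).
exists q2; split => // t'; rewrite inE => /orP[/eqP->|ts]; last exact: Hq2.
exact: lt_trans G21 Hq1.
Qed.

Lemma lsc_min (K : set 'rV[R]_n) (K0 : R) : compact K -> K !=set0 ->
  (forall p, K p -> (G p <= K0%:E)%E) ->
  exists2 ps, K ps & forall q, K q -> (G ps <= G q)%E.
Proof.
move=> Kc [p0 Kp0] KG.
case: (pselect (exists2 ps, K ps & forall q, K q -> (G ps <= G q)%E)) => // Hn.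
exfalso.
have Hq : forall p, K p -> exists q, K q /\ (G q < G p)%E.
  move=> p Kp; apply: contrapT => Hno; apply: Hn; exists p => // q Kq.
  rewrite leNgt; apply/negP => Gqp; apply: Hno; by exists q.
pose D := [set t : R | exists q, K q /\ (G q < t%:E)%E].
pose f := fun t : R => [set p : 'rV[R]_n | (t%:E < G p)%E].
have fop : forall t, D t -> open (f t).
  move=> t _.
  have -> : f t = ~` [set p | (G p <= t%:E)%E].
    apply/seteqP; split => p; rewrite /f /= ltNge; first by move=> /negP.
    by move/negP.
  by rewrite openC; exact: G_closed.
have Kcov : K `<=` cover D f.
  move=> p Kp; have [q [Kq Gqp]] := Hq p Kp.
  have Gpf := G_fin (le_lt_trans (KG p Kp) (ltry _)).
  have Gqf := G_fin (le_lt_trans (KG q Kq) (ltry _)).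
  move: Gqp; rewrite Gpf Gqf lte_fin => gqp.
  exists ((fine (G q) + fine (G p)) / 2).
    by exists q; split => //; rewrite Gqf lte_fin; lra.
  by rewrite /f /= Gpf lte_fin; lra.
have Kcc : cover_compact K by rewrite -compact_cover.
have [D' D'D D'cov] := Kcc R D f fop Kcov.
have [q [Kq Hq']] := @seq_pick K p0 (enum_fset D') Kp0
  (fun t tD => set_mem (D'D t tD)).
have [t tD' /= tq] := D'cov q Kq.
by have := Hq' t tD'; rewrite ltNge (ltW tq).
Qed.

Local Open Scope convex_scope.
Lemma convE' (x y : convex_lmodType 'rV[R]_n) (l : {i01 R}) :
  x <| l |> y = l%:num *: x + (1 - l%:num) *: y.
Proof. by []. Qed.

Lemma abs_main nu p0 : dotp p0 m = nu -> (G p0 < +oo)%E ->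
  let A := [set p | [/\ dotp p m = nu, (G p < +oo)%E &
     forall p', dotp p' m = nu -> (G p <= G p')%E]] in
  [/\ A !=set0, compact A & convex_set (A : set (convex_lmodType 'rV[R]_n))].
Proof.
move=> Hp0 Gp0 A.
set K0 := fine (G p0).
pose K := [set p | dotp p m = nu /\ (G p <= K0%:E)%E].
have [M HM] := level_bounded p0 K0.
have hypc : closed [set p : 'rV[R]_n | dotp p m = nu].
  have -> : [set p : 'rV[R]_n | dotp p m = nu] = (fun u => dotp u m) @^-1` [set x | x = nu].
    by [].
  apply: preimage_closed; last exact: closed_eq.
  by move=> u _; exact: dotp_cont.
have Kcl : closed K.
  have -> : K = [set p : 'rV[R]_n | dotp p m = nu] `&` [set p | (G p <= K0%:E)%E] by [].
  by apply: closedI => //; exact: G_closed.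
have Kb : bounded_set K.
  apply: (@bounded_of _ (`|p0| + M)) => p [pm Gp].
  have -> : p = p0 + (p - p0) by rewrite addrC subrK.
  rewrite (le_trans (ler_normD _ _))// lerD2l HM//.
  by rewrite pm Hp0.
have Kc : compact K by exact: bounded_closed_compact.
have Kp0 : K p0 by split => //; rewrite /K0 -G_fin.
have [ps Kps psmin] := lsc_min Kc (ex_intro _ p0 Kp0) (fun p Kp => Kp.2).
have Gps : (G ps < +oo)%E by exact: le_lt_trans Kps.2 (ltry _).
have psglob : forall p', dotp p' m = nu -> (G ps <= G p')%E.
  move=> p' p'm; have [Gp'|Gp'] := leP (G p') K0%:E.
    by apply: psmin.
  exact: le_trans Kps.2 (ltW Gp').
have Achar : A = [set p | dotp p m = nu /\ (G p <= G ps)%E].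
  apply/seteqP; split => p /=.
    by move=> [pm Gp Hp]; split => //; apply: Hp; exact: Kps.1.
  move=> [pm Gp]; split => //; first exact: le_lt_trans Gp Gps.
  by move=> p' p'm; exact: le_trans Gp (psglob _ p'm).
split.
- by exists ps; split => //; exact: Kps.1.
- apply: (subclosed_compact _ Kc).
    rewrite Achar.
    have -> : [set p | dotp p m = nu /\ (G p <= G ps)%E] =
      [set p : 'rV[R]_n | dotp p m = nu] `&` [set p | (G p <= (fine (G ps))%:E)%E].
      by rewrite -G_fin.
    by apply: closedI => //; exact: G_closed.
  rewrite Achar => p [pm Gp]; split => //.
  exact: le_trans Gp Kps.2.
- move=> x y l; rewrite !in_setE Achar /= => -[xm Gx] [ym Gy].
  rewrite convE'; split.
    by rewrite dotpD !dotpZ xm ym -mulrDl subrKC mul1r.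
  have Gxf : (G x < +oo)%E by exact: le_lt_trans Gx Gps.
  have Gyf : (G y < +oo)%E by exact: le_lt_trans Gy Gps.
  have ex : G x = G ps by apply/eqP; rewrite eq_le Gx psglob.
  have ey : G y = G ps by apply/eqP; rewrite eq_le Gy psglob.
  apply: (le_trans (G_conv _ Gxf Gyf)).
    by apply/andP; split.
  rewrite ex ey -mulrDl subrKC mul1r -G_fin//.
Qed.

End Abs.


Section Meas.
Context {d : measure_display} {T : measurableType d} {R : realType}
  (P : probability T R).
Local Notation Ex f := (Rintegral P setT f).

Lemma L1_fin f : isL1 P f -> (\int[P]_x (f x)%:E)%E = (Ex f)%:E.
Proof. by move=> [_ fi]; rewrite /Rintegral fineK// integrable_fin_num. Qed.

Lemma L1_le (f g : T -> R) : measurable_fun setT f -> isL1 P g ->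
  (forall x, `|f x| <= `|g x|) -> isL1 P f.
Proof.
move=> mf [mg gi] fg; split=> //; apply: le_integrable gi => //=.
- exact/measurable_EFinP.
- by move=> x _; rewrite /= lee_fin fg.
Qed.

Lemma L1D f g : isL1 P f -> isL1 P g -> isL1 P (fun x => f x + g x).
Proof.
move=> [mf fi] [mg gi]; split; first exact: measurable_funD.
have -> : (EFin \o (fun x => f x + g x)) = ((EFin \o f) \+ (EFin \o g))%E.
  by apply/funext => x.
exact: integrableD.
Qed.

Lemma L1Z (k : R) f : isL1 P f -> isL1 P (fun x => k * f x).
Proof.
move=> [mf fi]; split; first exact: measurable_funM.
have -> : (EFin \o (fun x => k * f x)) = (fun x => k%:E * (EFin \o f) x)%E.
  by apply/funext => x.
exact: integrableZl.
Qed.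

Lemma L1N f : isL1 P f -> isL1 P (fun x => - f x).
Proof.
move=> /(L1Z (-1)) [m i]; split.
  by move: m; congr measurable_fun; apply/funext => x; rewrite mulN1r.
by move: i; congr integrable; apply/funext => x; rewrite /= mulN1r.
Qed.

Lemma L1B f g : isL1 P f -> isL1 P g -> isL1 P (fun x => f x - g x).
Proof. by move=> fi gi; apply: L1D => //; exact: L1N. Qed.

Lemma L1cst (c : R) : isL1 P (cst c).
Proof.
split; first exact: measurable_cst.
apply/integrableP; split; first by apply/measurable_EFinP; exact: measurable_cst.
rewrite (_ : (fun x => `|(EFin \o cst c) x|)%E = cst `|c|%:E); last by apply/funext.
rewrite integral_cst//= probability_setT mule1; exact: ltry.
Qed.

Lemma L1_sum (I : Type) (s : seq I) (F : I -> T -> R) :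
  (forall i, isL1 P (F i)) -> isL1 P (fun x => \sum_(i <- s) F i x) /\
  Ex (fun x => \sum_(i <- s) F i x) = \sum_(i <- s) Ex (F i).
Proof.
move=> FL; elim: s => [|i s [IH1 IH2]].
  split.
    by move: (L1cst 0); congr isL1; apply/funext => x; rewrite big_nil.
  rewrite big_nil; under eq_Rintegral do rewrite big_nil.
  by rewrite Rintegral_cst// mul0r.
have e : (fun x => \sum_(j <- i :: s) F j x) = (fun x => F i x + \sum_(j <- s) F j x).
  by apply/funext => x; rewrite big_cons.
rewrite e big_cons; split; first exact: L1D.
by rewrite RintegralD// -?IH2//; [case: (FL i)|case: IH1].
Qed.

Lemma ExZ k f : isL1 P f -> Ex (fun x => k * f x) = k * Ex f.
Proof. by move=> [_ fi]; rewrite RintegralZl. Qed.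
Lemma ExD f g : isL1 P f -> isL1 P g -> Ex (fun x => f x + g x) = Ex f + Ex g.
Proof. by move=> [_ fi] [_ gi]; rewrite RintegralD. Qed.
Lemma ExB f g : isL1 P f -> isL1 P g -> Ex (fun x => f x - g x) = Ex f - Ex g.
Proof. by move=> [_ fi] [_ gi]; rewrite RintegralB. Qed.
Lemma Excst c : Ex (cst c) = c.
Proof. rewrite Rintegral_cst//. set u := fine _. have -> : u = 1 by rewrite /u; have := probability_setT P; move=> /= ->. by rewrite mulr1. Qed.
Lemma Ex_le f g : isL1 P f -> isL1 P g -> (forall x, f x <= g x) -> Ex f <= Ex g.
Proof. by move=> [_ fi] [_ gi] fg; apply: le_Rintegral. Qed.

Lemma ExN f : isL1 P f -> Ex (fun x => - f x) = - Ex f.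
Proof.
move=> fi; rewrite -mulN1r -ExZ//; apply: eq_Rintegral => x _; by rewrite mulN1r.
Qed.

Lemma maxN0_le (a : R) : `|Num.max (- a) 0| <= `|a|.
Proof.
have [a0|a0] := lerP 0 a.
  by rewrite max_r ?oppr_le0// normr0.
by rewrite max_l ?normrN// oppr_ge0 ltW.
Qed.

Lemma max0_le (a : R) : `|Num.max a 0| <= `|a|.
Proof. by have := maxN0_le (- a); rewrite opprK normrN. Qed.

Lemma maxN0_sub (a : R) : Num.max (- a) 0 - Num.max a 0 = - a.
Proof.
have [a0|a0] := lerP 0 a.
  by rewrite max_r ?oppr_le0// sub0r.
by rewrite max_l ?oppr_ge0 ?ltW// subr0.
Qed.

Lemma EnegZX_L1 (Z X : T -> R) : measurable_fun setT Z -> measurable_fun setT X ->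
  isL1 P (fun x => Z x * X x) ->
  EnegZX P Z X = (- Ex (fun x => Z x * X x))%:E.
Proof.
move=> mZ mX ZXi.
have m1 : measurable_fun setT (fun x => Z x * Num.max (- X x) 0).
  apply: measurable_funM => //; apply: measurable_maxr => //.
    exact: measurable_funN.
have m2 : measurable_fun setT (fun x => Z x * Num.max (X x) 0).
  apply: measurable_funM => //; apply: measurable_maxr => //.
have i1 : isL1 P (fun x => Z x * Num.max (- X x) 0).
  apply: L1_le m1 ZXi _ => x; rewrite !normrM ler_wpM2l//; exact: maxN0_le.
have i2 : isL1 P (fun x => Z x * Num.max (X x) 0).
  apply: L1_le m2 ZXi _ => x; rewrite !normrM ler_wpM2l//; exact: max0_le.
rewrite /EnegZX (L1_fin i1) (L1_fin i2).
case: eqP => [// | _].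
rewrite -EFinB -ExB// -ExN//; congr EFin; apply: eq_Rintegral => x _.
by rewrite -mulrBr maxN0_sub mulrN.
Qed.

Lemma mean_L1 f : isL1 P f -> mean P f = (Ex f)%:E.
Proof. exact: L1_fin. Qed.

Lemma L1_meas f : isL1 P f -> measurable_fun setT f.
Proof. by case. Qed.

Lemma ae0 f : isL1 P f -> (forall x, 0 <= f x) -> Ex f = 0 ->
  {ae P, forall x, f x = 0}.
Proof.
move=> fL f0 E0.
have : (\int[P]_(x in setT) `|(EFin \o f) x|)%E = 0.
  rewrite (_ : (fun x => `|(EFin \o f) x|)%E = (EFin \o f)); last first.
    by apply/funext => x /=; rewrite ger0_norm.
  by rewrite L1_fin// E0.
move/(ae_eq_integral_abs _ _ _).
have mf : measurable_fun setT (EFin \o f) by apply/measurable_EFinP; exact: L1_meas.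
move=> /(_ measurableT mf) H; by apply: filterS H => x /(_ I) /= [->].
Qed.

Lemma ae_Ex f g : isL1 P f -> measurable_fun setT g ->
  {ae P, forall x, f x = g x} -> Ex f = Ex g.
Proof.
move=> fL mg H; rewrite /Rintegral; congr fine.
apply: ae_eq_integral => //.
- by apply/measurable_EFinP; exact: L1_meas.
- by apply/measurable_EFinP.
- by apply: filterS H => x /= -> _.
Qed.

Lemma L1_abs f : isL1 P f -> isL1 P (fun x => `|f x|).
Proof.
move=> fL; apply: (L1_le _ fL) => [|x]; last by rewrite normr_id.
by apply: measurableT_comp => //; exact: L1_meas.
Qed.

Lemma max0_sub (a : R) : Num.max a 0 - Num.max (- a) 0 = a.
Proof. by rewrite -opprB maxN0_sub opprK. Qed.

Lemma L1_bdd (W X : T -> R) (B : R) : 0 <= B -> measurable_fun setT W ->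
  isL1 P X -> (forall x, `|W x| <= B) -> isL1 P (fun x => W x * X x).
Proof.
move=> B0 mW XL WB; apply: (L1_le _ (L1Z B XL)).
  exact: measurable_funM mW (L1_meas XL).
by move=> x; rewrite !normrM (ger0_norm B0) ler_wpM2r.
Qed.

Section Strict.
Variables (Q Qt : set (T -> R)).
Hypothesis QA : Q_admissible P Q.
Hypothesis INT : cond_INT P Q Qt.
Hypothesis Qt1 : Qt (cst 1).

Lemma rho_ge Z X : Q Z -> (EnegZX P Z X <= rho P Q X)%E.
Proof. by move=> QZ; apply: ereal_sup_ubound; exists Z. Qed.

Lemma strict_bound X : isL1 P X -> ~ (exists c : R, aeeq P X (cst c)) ->
  (- mean P X < rho P Q X)%E.
Proof.
move=> XL Xnc.
have mX := L1_meas XL.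
set mu := Ex X.
have XmL : isL1 P (fun x => X x - mu) by exact: (L1B XL (L1cst mu)).
have mXm := L1_meas XmL.
pose g := fun x => Num.max (- (X x - mu)) 0.
pose h := fun x => Num.max (X x - mu) 0.
have mg : measurable_fun setT g.
  by apply: measurable_maxr => //; exact: measurable_funN.
have mh : measurable_fun setT h by apply: measurable_maxr.
have gL : isL1 P g by apply: (L1_le mg XmL) => x; exact: maxN0_le.
have hL : isL1 P h by apply: (L1_le mh XmL) => x; exact: max0_le.
have g0 : forall x, 0 <= g x by move=> x; rewrite /g le_max lexx orbT.
have h0 : forall x, 0 <= h x by move=> x; rewrite /h le_max lexx orbT.
pose k := fun x => Num.min (g x) 1.
have mk : measurable_fun setT k by apply: measurable_minr.
have k0 : forall x, 0 <= k x by move=> x; rewrite /k le_min g0 ler01.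
have k1 : forall x, k x <= 1 by move=> x; rewrite /k ge_min lexx orbT.
have kL : isL1 P k.
  apply: (L1_le mk (L1cst 1)) => x; rewrite /= normr1 ger0_norm//.
have kgL : isL1 P (fun x => k x * g x).
  apply: (L1_le (measurable_funM mk mg) gL) => x.
  rewrite normrM !ger0_norm// -[leRHS]mul1r ler_wpM2r//.
have kXg : forall x, k x * (X x - mu) = - (k x * g x).
  move=> x; rewrite /k /g; have [a0|a0] := lerP 0 (X x - mu).
    by rewrite max_r ?oppr_le0// min_l ?ler01// !mul0r oppr0.
  by rewrite max_l ?oppr_ge0 ?ltW// mulrN opprK.
have Ekg : 0 < Ex (fun x => k x * g x).
  have ge0 : 0 <= Ex (fun x => k x * g x).
    by apply: Rintegral_ge0 => x _; rewrite mulr_ge0.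
  rewrite lt_def ge0 andbT; apply/eqP => E0; apply: Xnc; exists mu.
  have kg0 := ae0 kgL (fun x => mulr_ge0 (k0 x) (g0 x)) E0.
  have gz : {ae P, forall x, g x = 0}.
    apply: filterS kg0 => x /eqP; rewrite mulf_eq0 => /orP[/eqP|/eqP//].
    rewrite /k; case: (lerP (g x) 1) => // _ /eqP; by rewrite oner_eq0.
  have Eg0 : Ex g = 0.
    by rewrite (ae_Ex gL (measurable_cst (0:R)) gz) Excst.
  have Eh0 : Ex h = 0.
    have : Ex h - Ex g = 0.
      rewrite -ExB//; transitivity (Ex (fun x => X x - mu)).
        by apply: eq_Rintegral => x _; rewrite /h /g max0_sub.
      by rewrite (ExB XL (L1cst mu)) Excst subrr.
    by rewrite Eg0 subr0.
  have hz := ae0 hL h0 Eh0.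
  apply: filterS2 gz hz => x gx hx /=.
  have := max0_sub (X x - mu).
  by move: gx hx; rewrite /g /h => -> -> /eqP; rewrite subr0 eq_sym subr_eq0 => /eqP.
set ek := Ex k.
have ek0 : 0 <= ek by apply: Rintegral_ge0 => x _; exact: k0.
have ek1 : ek <= 1 by rewrite /ek -(Excst 1); apply: Ex_le => //; exact: L1cst.
pose Z := fun x => 1 + 2^-1 * (k x - ek).
have mZ : measurable_fun setT Z.
  apply: measurable_funD => //; apply: measurable_funM => //.
  by apply: measurable_funB.
have ZL : isL1 P Z by apply: L1D; [exact: L1cst|apply: L1Z; apply: L1B => //; exact: L1cst].
have Z0 : forall x, 0 <= Z x by move=> x; have := k0 x; have := k1 x; rewrite /Z; lra.
have Z2 : forall x, `|Z x| <= 2.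
  by move=> x; rewrite ger0_norm//; have := k0 x; have := k1 x; rewrite /Z; lra.
have EZ : Ex Z = 1.
  rewrite /Z ExD//; last by apply: L1Z; apply: L1B => //; exact: L1cst.
    rewrite ExZ; last by apply: L1B => //; exact: L1cst.
    by rewrite (ExB kL (L1cst ek)) !Excst subrr mulr0 addr0.
  exact: L1cst.
have ZXmL : isL1 P (fun x => Z x * (X x - mu)) by apply: (L1_bdd _ mZ XmL Z2).
have ZXL : isL1 P (fun x => Z x * X x) by apply: (L1_bdd _ mZ XL Z2).
set kap := 2^-1 * Ex (fun x => k x * g x).
have kap0 : 0 < kap by rewrite /kap mulr_gt0.
have EZXm : Ex (fun x => Z x * (X x - mu)) = - kap.
  transitivity (Ex (fun x => (1 - 2^-1 * ek) * (X x - mu) - 2^-1 * (k x * g x))).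
    apply: eq_Rintegral => x _; rewrite -[k x * g x]opprK -kXg /Z; ring.
  rewrite ExB; [|exact: L1Z|exact: L1Z].
  rewrite !ExZ// (ExB XL (L1cst mu)) Excst subrr mulr0 sub0r.
  by rewrite /kap.
have EZX : Ex (fun x => Z x * X x) = mu - kap.
  transitivity (Ex (fun x => Z x * (X x - mu) + mu * Z x)).
    by apply: eq_Rintegral => x _; rewrite mulrBr (mulrC mu) subrK.
  by rewrite ExD ?EZXm ?ExZ ?EZ ?mulr1 1?addrC//; exact: L1Z.
set ax := Ex (fun x => `|X x|).
have ax0 : 0 <= ax by apply: Rintegral_ge0 => x _.
set eps := kap / (ax + 1).
have eps0 : 0 < eps by rewrite /eps divr_gt0// ltr_wpDl.
have epsax : eps * ax < kap.
  have e1 : eps * (ax + 1) = kap by rewrite /eps mulfVK// gt_eqF// ltr_wpDl.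
  by rewrite -[ltRHS]e1 ltr_pM2l// ltrDl.
have [E [EDL Edense Elam]] := INT Qt1.
have DZ : Dset P Z.
  split => //; first exact: aeW.
  by rewrite mean_L1// EZ.
have LZ : isLinf P Z by split => //; exists 2; apply: aeW.
have [Z' EZ' Zclose] := Edense Z DZ LZ eps eps0.
have [[[mZ' _] _ _] _] := EDL Z' EZ'.
have [l /andP[l0 l1] Ql] := Elam Z' EZ'.
pose W := fun x => if `|Z x - Z' x| <= eps then Z' x else Z x.
have mW : measurable_fun setT W.
  apply: measurable_fun_ifT => //.
  apply: measurable_fun_ler => //.
  by apply: measurableT_comp => //; apply: measurable_funB.
have WZ : forall x, `|W x - Z x| <= eps.
  move=> x; rewrite /W; case: ifP => H; first by rewrite distrC.
  by rewrite subrr normr0 ltW.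
have WB : forall x, `|W x| <= 2 + eps.
  move=> x; have -> : W x = Z x + (W x - Z x) by rewrite addrC subrK.
  by rewrite (le_trans (ler_normD _ _))// lerD.
pose Zq := fun x => l * W x + (1 - l) * cst 1 x.
have mZq : measurable_fun setT Zq.
  apply: measurable_funD => //; apply: measurable_funM => //.
have QZq : Q Zq.
  case: QA => sat _ _ _; apply: (sat _ _ Ql mZq).
  by apply: filterS Zclose => x hx; rewrite /Zq /W hx.
have ZqB : forall x, `|Zq x| <= 3 + eps.
  move=> x; rewrite /Zq /= mulr1.
  rewrite (le_trans (ler_normD _ _))// !normrM (ger0_norm (ltW l0)).
  rewrite (ger0_norm (_ : 0 <= 1 - l)); last by rewrite subr_ge0 ltW.
  have := WB x; have := normr_ge0 (W x).
  nra.
have ZqXL : isL1 P (fun x => Zq x * X x).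
  by apply: (L1_bdd _ mZq XL ZqB); rewrite addr_ge0 ?ltW.
have WXL : isL1 P (fun x => W x * X x) by apply: (L1_bdd _ mW XL WB); rewrite addr_ge0 ?ltW.
have EWX : Ex (fun x => W x * X x) <= mu - kap + eps * ax.
  rewrite -EZX /ax -ExZ; last exact: L1_abs.
  rewrite -ExD//; last by apply: L1Z; exact: L1_abs.
  apply: Ex_le => //; first by apply: L1D => //; apply: L1Z; exact: L1_abs.
  move=> x; rewrite -lerBlDl -mulrBl.
  rewrite (le_trans (ler_norm _))// normrM ler_wpM2r//.
have EZqX : Ex (fun x => Zq x * X x) = l * Ex (fun x => W x * X x) + (1 - l) * mu.
  transitivity (Ex (fun x => l * (W x * X x) + (1 - l) * X x)).
    by apply: eq_Rintegral => x _; rewrite /Zq /= mulr1 mulrDl mulrA.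
  by rewrite ExD ?ExZ//; apply: L1Z.
have lt : Ex (fun x => Zq x * X x) < mu.
  rewrite EZqX.
  have : l * Ex (fun x => W x * X x) <= l * (mu - kap + eps * ax).
    by rewrite ler_wpM2l// ltW.
  have : 0 < l * (kap - eps * ax) by rewrite mulr_gt0// subr_gt0.
  nra.
rewrite mean_L1// -/mu.
apply: (lt_le_trans _ (rho_ge X QZq)).
rewrite (EnegZX_L1 mZq mX ZqXL) lte_fin ltrN2.
exact: lt.
Qed.

End Strict.

Section MarketP.
Variables (n : nat) (r : R) (S0 : 'I_n -> R) (S1 : 'I_n -> T -> R).
Hypothesis RL : forall i, isL1 P (Ret S0 S1 i).

Definition cv (Z : T -> R) : 'rV[R]_n :=
  \row_i Ex (fun w => Z w * (Ret S0 S1 i w - r)).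

Lemma ZRr (Z : T -> R) i : isL1 P Z -> isL1 P (fun w => Z w * Ret S0 S1 i w) ->
  isL1 P (fun w => Z w * (Ret S0 S1 i w - r)).
Proof.
move=> ZL ZRL.
have -> : (fun w => Z w * (Ret S0 S1 i w - r)) = (fun w => Z w * Ret S0 S1 i w - r * Z w).
  by apply/funext => w; rewrite mulrBr (mulrC r).
by apply: L1B => //; exact: L1Z.
Qed.

Lemma ZXpi (Z : T -> R) (p : 'rV[R]_n) : isL1 P Z ->
  (forall i, isL1 P (fun w => Z w * Ret S0 S1 i w)) ->
  isL1 P (fun w => Z w * Xpi r S0 S1 p w) /\ Ex (fun w => Z w * Xpi r S0 S1 p w) = dotp p (cv Z).
Proof.
move=> ZL ZRL.
have Fi : forall i, isL1 P (fun w => p 0 i * (Z w * (Ret S0 S1 i w - r))).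
  by move=> i; apply: L1Z; apply: ZRr.
have [H1 H2] := L1_sum (index_enum 'I_n) Fi.
have e : (fun w => Z w * Xpi r S0 S1 p w) =
    (fun w => \sum_(i <- index_enum 'I_n) p 0 i * (Z w * (Ret S0 S1 i w - r))).
  apply/funext => w; rewrite /Xpi mulr_sumr; apply: eq_bigr => i _.
  by rewrite mulrCA.
rewrite e; split => //; rewrite H2 /dotp; apply: eq_bigr => i _.
by rewrite mxE ExZ//; apply: ZRr.
Qed.

End MarketP.

End Meas.

Theorem proposition4p11 (d : measure_display) (T : measurableType d)
  (R : realType) (P : probability T R)
  (n : nat) (r : R) (S0 : 'I_n -> R) (S1 : 'I_n -> T -> R)
  (L Q Qt : set (T -> R)) :
  market_assumptions P r S0 S1 ->
  riesz_between P L ->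
  (forall pi : 'rV[R]_n, L (Xpi r S0 S1 pi)) ->
  Q_admissible P Q ->
  cond_I P S0 S1 Q ->
  ae_saturated P Qt ->
  Qt `<=` Q ->
  cond_POS P Qt ->
  cond_INT P Q Qt ->
  Qt (cst 1) ->
  [/\ strictly_expectation_bounded P L Q,
      Pi_rho P r S0 S1 Q 0 = [set 0] &
      ((rho_nu P r S0 S1 Q 1 < +oo)%E ->
        forall nu : R, 0 <= nu ->
          [/\ Pi_rho P r S0 S1 Q nu !=set0,
              compact (Pi_rho P r S0 S1 Q nu) &
              convex_set (Pi_rho P r S0 S1 Q nu : set (convex_lmodType 'rV[R]_n))])].
Proof.
move=> [r1 [S0p mS1 NR RL Emean]] RB LX QA CI satQt QtQ POS INTc Qt1.
have QL : forall Z, Q Z -> isL1 P Z /\ forall i, isL1 P (fun w => Z w * Ret S0 S1 i w).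
  by move=> Z QZ; case: QA => _ QD _ _; have [ZL _ _] := QD Z QZ; split => // i; exact: CI.
have Q1 : Q (cst 1) by case: QA.
set m := cv P r S0 S1 (cst 1).
set C := [set cv P r S0 S1 Z | Z in Q].
have Cm : C m by exists (cst 1).
have RL1 : forall i, isL1 P (fun w => cst 1 w * Ret S0 S1 i w).
  by move=> i; exact: (QL _ Q1).2.
have XL : forall p, isL1 P (Xpi r S0 S1 p).
  move=> p; have [H _] := ZXpi r p (L1cst P 1) RL1.
  by move: H; congr isL1; apply/funext => w; rewrite /= mul1r.
have meanX : forall p, mean P (Xpi r S0 S1 p) = (dotp p m)%:E.
  move=> p; have [_ H] := ZXpi r p (L1cst P 1) RL1.
  rewrite mean_L1 // -H; congr EFin; apply: eq_Rintegral => w _; by rewrite /= mul1r.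
have rhoG : forall p, rho P Q (Xpi r S0 S1 p) = G C p.
  move=> p; rewrite /rho /G; congr ereal_sup; apply/seteqP; split => y /=.
    move=> [Z QZ <-]; exists (cv P r S0 S1 Z); first by exists Z.
    have [ZL ZRL] := QL Z QZ; have [H1 H2] := ZXpi r p ZL ZRL.
    by rewrite (EnegZX_L1 (L1_meas ZL) (L1_meas (XL p)) H1) H2.
  move=> [_ [Z QZ <-] <-]; exists Z => //.
  have [ZL ZRL] := QL Z QZ; have [H1 H2] := ZXpi r p ZL ZRL.
  by rewrite (EnegZX_L1 (L1_meas ZL) (L1_meas (XL p)) H1) H2.
have H2 : forall u, dotp u m = 0 -> u != 0 -> (0%:E < G C u)%E.
  move=> u um u0; rewrite -rhoG.
  have : (- mean P (Xpi r S0 S1 u) < rho P Q (Xpi r S0 S1 u))%E.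
    apply: (strict_bound QA INTc Qt1 (XL u)) => -[c hc].
    have c0 : c = 0.
      have := ae_Ex (XL u) (measurable_cst c) hc.
      rewrite Excst => Ec.
      by have := meanX u; rewrite mean_L1 ?um // Ec => -[].
    have hz : {ae P, forall w, Xpi r S0 S1 u w = 0}.
      by apply: filterS hc => w ->; rewrite c0.
    pose th0 := - \sum_i u 0 i.
    pose th : 'rV[R]_n := \row_i (u 0 i / S0 i).
    have cond1 : th0 * 1 + \sum_i th 0 i * S0 i = 0.
      rewrite mulr1 /th0 /th.
      rewrite [X in _ + X](eq_bigr (fun i => u 0 i)) ?addNr// => i _.
      by rewrite mxE divfK ?gt_eqF ?S0p.
    have cond2 : {ae P, forall w, th0 * (1 + r) + \sum_i th 0 i * S1 i w = 0}.
      apply: filterS hz => w hw.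
      have e : \sum_i th 0 i * S1 i w = Xpi r S0 S1 u w + (1 + r) * \sum_i u 0 i.
        rewrite /th /Xpi mulr_sumr -big_split; apply: eq_bigr => i _.
        rewrite mxE /Ret /=; field.
        by rewrite gt_eqF ?S0p.
      by rewrite e hw add0r /th0 mulNr mulrC addNr.
    have [_ th00] := NR th0 th cond1 cond2.
    move/negP: u0; apply; apply/eqP/matrixP => a b; rewrite (ord1 a) !mxE.
    move/matrixP: th00 => /(_ 0 b); rewrite !mxE => /eqP.
    by rewrite mulf_eq0 invr_eq0 (gt_eqF (S0p b)) orbF => /eqP.
  by rewrite meanX um /= oppr0.
have PiE : forall nu, Pi_rho P r S0 S1 Q nu =
    [set p | [/\ dotp p m = nu, (G C p < +oo)%E &
       forall p', dotp p' m = nu -> (G C p <= G C p')%E]].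
  move=> nu; apply/seteqP; split => p /=.
    move=> [pm pf pmin]; split.
    - by move: pm; rewrite /Pi_nu /= meanX => -[].
    - by rewrite -rhoG.
    - move=> p' p'm; rewrite -!rhoG; apply: pmin; by rewrite /Pi_nu /= meanX p'm.
  move=> [pm pf pmin]; split.
  - by rewrite /Pi_nu /= meanX pm.
  - by rewrite rhoG.
  - move=> p' p'm; rewrite !rhoG; apply: pmin; by move: p'm; rewrite /Pi_nu /= meanX => -[].
split.
- move=> X LX' Xnc; apply: (strict_bound QA INTc Qt1) => //.
  by case: RB => _ [_ _ _ _ HL]; exact: HL.
- rewrite PiE; apply/seteqP; split => p /=.
    move=> [pm _ pmin]; apply/eqP; apply: contraT => p0.
    have := pmin 0; rewrite dotp0 (G0 Cm) => /(_ erefl) Gp.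
    by have := H2 p pm p0; rewrite ltNge Gp.
  move=> ->; split; [exact: dotp0 | by rewrite (G0 Cm) ltry | ].
  by move=> p' p'm; rewrite (G0 Cm); have := G_gem Cm p'; rewrite p'm oppr0.
- move=> rho1 nu nu0.
  have [_ [p1 Pp1 <-] Gp1] := ereal_inf_lt rho1.
  rewrite rhoG in Gp1.
  have p1m : dotp p1 m = 1 by move: Pp1; rewrite /Pi_nu /= meanX => -[].
  have Gp0 : (G C (nu *: p1) < +oo)%E := le_lt_trans (G_scale Cm nu0 Gp1) (ltry _).
  have p0m : dotp (nu *: p1) m = nu by rewrite dotpZ p1m mulr1.
  rewrite PiE; exact: (abs_main Cm H2 p0m Gp0).
Qed.
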